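(* Let $n$ be a positive integer such that $n\equiv \pm 2\pmod{12}$. Then it is possible to place $n-1$ queens on $\mathbb{Z}_n^2$ without conflict.
   Context: Queens are placed on distinct fields of the torus board $\mathbb{Z}_n^2$. Two queens at distinct fields $(x,y),(x',y')$ are in conflict iff $x=x'$, or $y=y'$, or $x+y=x'+y'$, or $x-y=x'-y'$ in $\mathbb{Z}_n$ (equivalently, the difference of the fields is $t\mathbf{x}$ for some $t\in\mathbb{Z}_n$ and nonzero $\mathbf{x}\in\{-1,0,1\}^2$). A placement is without conflict if no two queens are in conflict. *)

(* Defs.v *)
From mathcomp Require Import all_boot.
Set Implicit Arguments. Unset Strict Implicit. Unset Printing Implicit Defensive.

Definition field (n : nat) : finType := ('I_n * 'I_n)%type.

(* Two fields are in conflict iff same row, same column, same sum mod n,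
   or same difference mod n  (x - y = x' - y' in Z_n  <=>  x + y' = x' + y mod n). *)
Definition conflict (n : nat) (p q : field n) : bool :=
  [|| p.1 == q.1, p.2 == q.2,
      (p.1 + p.2 == q.1 + q.2 %[mod n])%N
    | (p.1 + q.2 == q.1 + p.2 %[mod n])%N].

Definition conflict_free (n : nat) (Q : {set field n}) : Prop :=
  forall p q, p \in Q -> q \in Q -> p != q -> ~~ conflict p q.

(* Main.v *)
Require Import Defs.
From mathcomp Require Import all_boot zify.

Lemma modq (X n c : nat) : 0 < n -> X < c * n ->
  exists q, q < c /\ X = q * n + X %% n /\ X %% n < n.
Proof.
move=> n0 Xlt; exists (X %/ n); split; first by rewrite ltn_divLR // mulnC.
by split; [exact: divn_eq | exact: ltn_pmod].
Qed.

Definition HypA (n m t k k' a a' y y' : nat) :=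
  (m = 6 * t + 1 \/ m = 6 * t + 5) /\ n = 2 * m /\ k < n /\ k' < n /\
   k <> m /\ k' <> m /\
   (a = k - 1 /\ m < k \/ a = k /\ k < m) /\
   (a' = k' - 1 /\ m < k' \/ a' = k' /\ k' < m) /\
   ((exists q, q < 3 /\ 3 * k = q * n + y /\ y < n) /\
    (exists q, q < 3 /\ 3 * k' = q * n + y' /\ y' < n)).

Lemma c1 n m t k k' a a' y y' : HypA n m t k k' a a' y y' -> a = a' -> k = k'.
Proof. case=> Hn [Hm [Hk [Hk' [Hkm [Hkm' [Ha [Ha' _]]]]]]]; lia. Qed.

Lemma c2 n m t k k' a a' y y' : HypA n m t k k' a a' y y' -> y = y' -> k = k'.
Proof.
case=> Hn [Hm [Hk [Hk' [Hkm [Hkm' [Ha [Ha' [[q [Hq [E L]]] [q' [Hq' [E' L']]]]]]]]]]] Eyy.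
rewrite Eyy in E; clear Ha Ha'; move: E E'; subst n.
case: Hn => Hn; subst m;
case: q Hq => [|[|[|]]] // _; case: q' Hq' => [|[|[|]]] // _ E E'; lia.
Qed.

Lemma c34 n m t k k' a a' y y' : HypA n m t k k' a a' y y' ->
  (a + y) %% n = (a' + y') %% n -> k = k'.
Proof.
case=> Hn [Hm [Hk [Hk' [Hkm [Hkm' [Ha [Ha' [[q [Hq [E L]]] [q' [Hq' [E' L']]]]]]]]]]] H.
have n0 : 0 < n by lia.
have [s [Hs [Es Ls]]] := modq (a + y) n 2 n0 ltac:(lia).
have [s' [Hs' [Es' Ls']]] := modq (a' + y') n 2 n0 ltac:(lia).
rewrite H in Es; move: Es Es' Ls'; set A := (a' + y') %% n => Es Es' Ls'.
clearbody A; clear H Ls; subst n.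
case: Hn => Hn; subst m;
case: Ha => [[Ea ?]|[Ea ?]]; subst a;
case: Ha' => [[Ea' ?]|[Ea' ?]]; subst a';
move: E E' Es Es';
case: q Hq => [|[|[|]]] // _; case: q' Hq' => [|[|[|]]] // _;
case: s Hs => [|[|]] // _; case: s' Hs' => [|[|]] // _ => E E' Es Es'; lia.
Qed.

Lemma c4 n m t k k' a a' y y' : HypA n m t k k' a a' y y' ->
  (a + y') %% n = (a' + y) %% n -> k = k'.
Proof.
case=> Hn [Hm [Hk [Hk' [Hkm [Hkm' [Ha [Ha' [[q [Hq [E L]]] [q' [Hq' [E' L']]]]]]]]]]] H.
have n0 : 0 < n by lia.
have [s [Hs [Es Ls]]] := modq (a + y') n 2 n0 ltac:(lia).
have [s' [Hs' [Es' Ls']]] := modq (a' + y) n 2 n0 ltac:(lia).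
rewrite H in Es; move: Es Es' Ls'; set A := (a' + y) %% n => Es Es' Ls'.
clearbody A; clear H Ls; subst n.
case: Hn => Hn; subst m;
case: Ha => [[Ea ?]|[Ea ?]]; subst a;
case: Ha' => [[Ea' ?]|[Ea' ?]]; subst a';
move: E E' Es Es';
case: q Hq => [|[|[|]]] // _; case: q' Hq' => [|[|[|]]] // _;
case: s Hs => [|[|]] // _; case: s' Hs' => [|[|]] // _ => E E' Es Es'; lia.
Qed.

Definition inZ (p i : nat) : 'I_p.+1 := Ordinal (ltn_pmod i (ltn0Sn p)).

Theorem lemma2 (n : nat) :
  0 < n -> (n %% 12 = 2 \/ n %% 12 = 10) ->
  exists Q : {set field n}, #|Q| = n.-1 /\ conflict_free Q.
Proof.
case: n => [//|n'] _ Hmod.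
pose m := n'.+1 %/ 2.
pose t := n'.+1 %/ 12.
have Hm2 : n'.+1 = 2 * m by lia.
have Ht : m = 6 * t + 1 \/ m = 6 * t + 5 by lia.
clearbody m t.
pose F := fun k : 'I_n'.+1 =>
  (inZ n' (k - (m < k)), inZ n' (3 * k)).
pose D := [pred k : 'I_n'.+1 | val k != m].
have key : forall k k' : 'I_n'.+1, k \in D -> k' \in D ->
    conflict (F k) (F k') -> k = k'.
  move=> k k' Hk Hk' Hc; apply: ord_inj.
  have H : HypA n'.+1 m t k k' (k - (m < k)) (k' - (m < k'))
            (3 * k %% n'.+1) (3 * k' %% n'.+1).
    split; first by lia.
    split; first by lia.
    split; first exact: ltn_ord.
    split; first exact: ltn_ord.
    split; first by move/eqP: Hk.
    split; first by move/eqP: Hk'.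
    split. move/eqP: (Hk) => Hkm; case: (ltnP m k) => Hle /=; [by left | right; split; [by rewrite subn0 | rewrite ltn_neqAle Hle andbT; exact/eqP]].
    split. move/eqP: (Hk') => Hkm; case: (ltnP m k') => Hle /=; [by left | right; split; [by rewrite subn0 | rewrite ltn_neqAle Hle andbT; exact/eqP]].
    have := ltn_ord k; have := ltn_ord k' => ? ?.
    split; apply: modq => //; lia.
  move: Hc; rewrite /conflict /F /= -!val_eqE /=.
  have ha : (k - (m < k)) %% n'.+1 = k - (m < k).
    by apply: modn_small; have := ltn_ord k; lia.
  have ha' : (k' - (m < k')) %% n'.+1 = k' - (m < k').
    by apply: modn_small; have := ltn_ord k'; lia.
  rewrite ha ha'.
  case/or4P => /eqP E.
  - exact: (c1 _ _ _ _ _ _ _ _ _ H E).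
  - exact: (c2 _ _ _ _ _ _ _ _ _ H E).
  - exact: (c34 _ _ _ _ _ _ _ _ _ H E).
  - exact: (c4 _ _ _ _ _ _ _ _ _ H E).
exists (F @: D); split.
  rewrite card_in_imset; last first.
    move=> k k' Hk Hk' E; apply: key => //.
    by rewrite E /conflict eqxx.
  have mlt : m < n'.+1 by lia.
  have -> : n'.+1.-1 = #|predC1 (Ordinal mlt)| by rewrite cardC1 card_ord.
  apply: eq_card => k; rewrite !inE /=.
  done.
move=> p q /imsetP[k Hk ->] /imsetP[k' Hk' ->] Hne.
apply/negP => Hc; move/eqP: Hne; apply.
by rewrite (key k k' Hk Hk' Hc).
Qed.
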